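(* Let $g_n$, $n\in\mathbb N$, be wasteful partial functions from $X^M$ to a set $Y$. Then there exist a set $A\subseteq X^M$ of width $1$, injective partial functions $g_n'\subseteq g_n$ ($n\in\mathbb N$) such that $A$ is the disjoint union of the sets $\operatorname{dom}(g_n')$, and partial functions $h_n$ from $X^M$ to $A$, such that $g_n=g_n'\circ h_n$ for all $n\in\mathbb N$.
   Context: $X=\omega\times\omega$, elements $(a|b)$ ($x$-coordinate $a$, $y$-coordinate $b$); $M=\{1,\dots,m\}$. Width of $Y\subseteq X$: $\sup_n|Y\cap(\omega\times\{n\})|$; the width of a set $A\subseteq X^M$ is the maximum of the widths of its projections onto the components $i\in M$. $B^M_k=\{u\in X^M:\exists i\in M\,((u_i)^y<k)\}$; a subset of $X^M$ is bounded iff contained in some $B^M_k$. A partial function $p$ from $X^M$ to $Y$ is wasteful iff $p^{-1}[d]$ is unbounded for every $d\in\operatorname{ran}(p)$. Composition of partial functions: $(g\circ h)(u)$ is defined iff $h(u)$ is defined and lies in $\operatorname{dom}(g)$. *)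

(* Defs.v *)
From mathcomp Require Import all_boot.
Set Implicit Arguments. Unset Strict Implicit. Unset Printing Implicit Defensive.

(* X = omega x omega; a point (a|b) is the pair (a, b), x-coordinate a, y-coordinate b. *)
Definition X := (nat * nat)%type.
(* X^M with M = {1,...,m}, indexed here by 'I_m = {0,...,m-1}. *)
Definition XM (m : nat) := ('I_m -> X)%type.

Definition pfun (S T : Type) := S -> option T.

Definition dom {S T} (p : pfun S T) (u : S) : Prop := exists y, p u = Some y.

(* p ⊆ q as sets of pairs *)
Definition psub {S T} (p q : pfun S T) : Prop :=
  forall u y, p u = Some y -> q u = Some y.

Definition pinjective {S T} (p : pfun S T) : Prop :=
  forall u v y, p u = Some y -> p v = Some y -> u = v.

Definition pfcomp {S T U} (g : pfun T U) (h : pfun S T) : pfun S U :=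
  fun u => match h u with Some v => g v | None => None end.

Definition BMk (m k : nat) (u : XM m) : Prop := exists i : 'I_m, (u i).2 < k.

Definition bounded (m : nat) (S : XM m -> Prop) : Prop :=
  exists k, forall u, S u -> BMk k u.

Definition wasteful (m : nat) {Y} (p : pfun (XM m) Y) : Prop :=
  forall d, (exists u, p u = Some d) -> ~ bounded (fun u => p u = Some d).

(* |Z ∩ (omega x {n})| <= k *)
Definition row_card_le (Z : X -> Prop) (n k : nat) : Prop :=
  forall s : seq X, uniq s -> (forall x, x \in s -> Z x /\ x.2 = n) -> size s <= k.

Definition width_le (Z : X -> Prop) (k : nat) : Prop := forall n, row_card_le Z n k.

Definition proj (m : nat) (A : XM m -> Prop) (i : 'I_m) (x : X) : Prop :=
  exists u, A u /\ u i = x.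

Definition widthM_le (m : nat) (A : XM m -> Prop) (k : nat) : Prop :=
  forall i : 'I_m, width_le (proj A i) k.

(* Main.v *)
From Stdlib Require Import ClassicalEpsilon ClassicalDescription FunctionalExtensionality Classical.
Require Import Defs.
From mathcomp Require Import all_boot.
Set Implicit Arguments. Unset Strict Implicit. Unset Printing Implicit Defensive.

Definition u0 m : XM m := fun _ => (0,0).
Definition rep m Y (g : nat -> pfun (XM m) Y) n d : XM m :=
  epsilon (inhabits (@u0 m)) (fun u => g n u = Some d).
Definition pick m Y (g : nat -> pfun (XM m) Y) n d k : XM m :=
  epsilon (inhabits (@u0 m)) (fun u => g n u = Some d /\ forall i, k <= (u i).2).
Definition task m Y (g : nat -> pfun (XM m) Y) (c : nat) : option (nat * Y) :=
  match @pickle_inv (nat * {ffun 'I_m -> X})%type c with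
  | Some (n, f) => match g n (fun i => f i) with
                   | Some d => if finfun (rep g n d) == f then Some (n, d) else None
                   | None => None end
  | None => None end.
Definition pt m Y (g : nat -> pfun (XM m) Y) c b : XM m :=
  match task g c with Some (n, d) => pick g n d b | None => @u0 m end.
Fixpoint B m Y (g : nat -> pfun (XM m) Y) c : nat :=
  match c with 0 => 0 | c'.+1 => B g c' + 1 + \sum_(i < m) ((pt g c' (B g c')) i).2 end.
Definition a m Y (g : nat -> pfun (XM m) Y) c : XM m := pt g c (B g c).

Lemma pick_spec m Y (g : nat -> pfun (XM m) Y) n d k u :
  wasteful (g n) -> g n u = Some d ->
  g n (pick g n d k) = Some d /\ forall i, k <= (pick g n d k i).2.
Proof.
move=> W gu; apply: (epsilon_spec (inhabits (@u0 m)) (fun u => g n u = Some d /\ forall i, k <= (u i).2)).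
apply: NNPP => H; apply: (W d (ex_intro _ u gu)); exists k => v gv.
have : ~ (forall i, k <= (v i).2) by move=> H2; apply: H; exists v.
move/not_all_ex_not => [i Hi]; exists i; rewrite ltnNge; apply/negP => //.
Qed.

Lemma rep_spec m Y (g : nat -> pfun (XM m) Y) n d u :
  g n u = Some d -> g n (rep g n d) = Some d.
Proof.
move=> gu; exact: (epsilon_spec (inhabits (@u0 m)) (fun u => g n u = Some d) (ex_intro _ u gu)).
Qed.

Lemma task_a m Y (g : nat -> pfun (XM m) Y) (Hg : forall n, wasteful (g n)) c n d :
  task g c = Some (n, d) -> g n (a g c) = Some d /\ forall i, B g c <= (a g c i).2.
Proof.
rewrite /a /pt => E; rewrite E; move: E; rewrite /task.
case: (pickle_inv c) => [[n' f]|] //.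
case E: (g n' _) => [d'|] //; case: ifP => // _ [<- <-].
exact: (pick_spec _ (Hg n') E).
Qed.

Lemma task_inj m Y (g : nat -> pfun (XM m) Y) c c' nd :
  task g c = Some nd -> task g c' = Some nd -> c = c'.
Proof.
rewrite /task.
have K1 := @pickle_invK (nat * {ffun 'I_m -> X})%type c; have K2 := @pickle_invK (nat * {ffun 'I_m -> X})%type c'.
case: (pickle_inv c) K1 => [[n f]|] //= K1.
case: (g n _) => [d|] //; case: ifP => // /eqP E1 [<-].
case: (pickle_inv c') K2 => [[n' f']|] //= K2.
case: (g n' _) => [d'|] //; case: ifP => // /eqP E2 [En Ed]; subst n' d'.
by rewrite -K1 -K2 -E1 -E2.
Qed.

Lemma B_mono m Y (g : nat -> pfun (XM m) Y) c k : B g c <= B g (c + k).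
Proof.
elim: k => [|k IH]; first by rewrite addn0.
rewrite addnS /=; apply: (leq_trans IH); rewrite -addnA; exact: leq_addr.
Qed.

Lemma a_lt m Y (g : nat -> pfun (XM m) Y) c i : (a g c i).2 < B g c.+1.
Proof.
rewrite /= -addnA; apply: leq_trans (leq_addl (B g c) _).
by rewrite add1n ltnS /a (bigD1 i) //= leq_addr.
Qed.

Lemma band m Y (g : nat -> pfun (XM m) Y) (Hg : forall n, wasteful (g n)) c c' nd nd' i :
  task g c = Some nd -> task g c' = Some nd' -> (a g c i).2 = (a g c' i).2 -> c = c'.
Proof.
move=> T1 T2 E.
case: (ltngtP c c') => // Hc.
- case: nd' T2 => n d T2; have [_ L] := task_a Hg T2.
  have := a_lt g c i; rewrite E => H.
  have := B_mono g c.+1 (c' - c.+1); rewrite subnKC // => H2.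
  by have := leq_trans (leq_trans H H2) (L i); rewrite ltnn.
- case: nd T1 => n d T1; have [_ L] := task_a Hg T1.
  have := a_lt g c' i; rewrite -E => H.
  have := B_mono g c'.+1 (c - c'.+1); rewrite subnKC // => H2.
  by have := leq_trans (leq_trans H H2) (L i); rewrite ltnn.
Qed.

Theorem mainTheorem5 (m : nat) (Hm : 0 < m) (Y : Type)
  (g : nat -> pfun (XM m) Y) (Hg : forall n, wasteful (g n)) :
  exists (A : XM m -> Prop) (g' : nat -> pfun (XM m) Y) (h : nat -> pfun (XM m) (XM m)),
    widthM_le A 1 /\
    (forall n, psub (g' n) (g n) /\ pinjective (g' n)) /\
    (forall u, A u <-> exists n, dom (g' n) u) /\
    (forall n k u, n <> k -> dom (g' n) u -> dom (g' k) u -> False) /\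
    (forall n u v, h n u = Some v -> A v) /\
    (forall n u, g n u = pfcomp (g' n) (h n) u).
Proof.
pose P n v := exists c d, task g c = Some (n, d) /\ v = a g c.
pose g' n v := if excluded_middle_informative (P n v) then g n v else None.
have g'E : forall n v y, g' n v = Some y <-> P n v /\ g n v = Some y.
  move=> n v y; rewrite /g'; case: excluded_middle_informative => Hp /=.
  - by split => [->|[]].
  - by split => // -[].
exists (fun v => exists c nd, task g c = Some nd /\ v = a g c), g'.
exists (fun n u => match g n u with
  | Some d => Some (a g (pickle (n, finfun (rep g n d)))) | None => None end).
have taskh : forall n u d, g n u = Some d ->
    task g (pickle (n, finfun (rep g n d))) = Some (n, d).
  move=> n u d gu; rewrite /task pickleK_inv.
  have -> : (fun i => finfun (rep g n d) i) = rep g n d.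
    by apply: functional_extensionality => i; rewrite ffunE.
  by rewrite (rep_spec gu) eqxx.
split; [|split; [|split; [|split; [|split]]]].
- move=> i r s Us Hs.
  case: s Us Hs => [|x [|y s]] //= Us Hs.
  exfalso.
  have [[u [[c [nd [Tc Eu]]] Ux]] Ex] := Hs x (mem_head _ _).
  have [[v [[c' [nd' [Tc' Ev]]] Uy]] Ey] := Hs y (ltac:(by rewrite !inE eqxx orbT)).
  have E : (a g c i).2 = (a g c' i).2 by rewrite -Eu -Ev Ux Uy Ex Ey.
  have Ecc := band Hg Tc Tc' E; subst c'.
  have Exy : x = y by rewrite -Ux -Uy Eu Ev.
  by move: Us; rewrite Exy inE eqxx.
- move=> n; split; first by move=> u y /g'E [].
  move=> u v y /g'E [[c [d [Tc ->]]] gu] /g'E [[c' [d' [Tc' ->]]] gv].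
  have [g1 _] := task_a Hg Tc; have [g2 _] := task_a Hg Tc'.
  move: gu gv; rewrite g1 g2 => -[E1] [E2]; subst d d'.
  by rewrite (task_inj Tc Tc').
- move=> u; split.
  + move=> [c [[n d] [Tc ->]]]; exists n, d; apply/g'E; split.
    * by exists c, d.
    * by case: (task_a Hg Tc).
  + move=> [n [y /g'E [[c [d [Tc ->]]] _]]]; by exists c, (n, d).
- move=> n k u nk [y /g'E [[c [d [Tc ->]]] _]] [y' /g'E [[c' [d' [Tc' E]]] _]].
  have [i0 _] : exists i : 'I_m, True by exists (Ordinal Hm).
  have Ecc := band Hg Tc Tc' (f_equal (fun w => (w i0).2) E); subst c'.
  by move: Tc'; rewrite Tc => -[].
- move=> n u v; case E: (g n u) => [d|] // [<-].
  by exists (pickle (n, finfun (rep g n d))), (n, d); rewrite (taskh _ _ _ E).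
- move=> n u; rewrite /pfcomp; case E: (g n u) => [d|] //.
  have T := taskh _ _ _ E; have [ga _] := task_a Hg T.
  symmetry; apply/g'E; split => //; by exists (pickle (n, finfun (rep g n d))), d.
Qed.
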